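(* Let $q>1$. The maximum success probability of any strategy for the New Hats-on-a-line Game with $q$ hat colours and two players is $1-\left(\frac{q-1}{q}\right)^{2}=\frac{2q-1}{q^2}$.
   Context: The New Hats-on-a-line Game with $q$ colours and $n$ players: players $P_1,\dots,P_n$ stand in a line, and each player $P_i$ receives a hat whose colour $c_i$ is chosen uniformly at random from a fixed set of $q$ colours, independently of the other hats. Player $P_i$ sees exactly the hat colours $c_{i+1},\dots,c_n$. The players respond sequentially in the order $P_1,\dots,P_n$; each response is either a colour (a guess of one's own hat colour) or ''pass'', and each player hears all previous responses. No other communication is allowed, apart from agreeing on a strategy beforehand. A strategy specifies, for each player $P_i$, his response as a function of the colours he sees and the responses he has heard. The players win if at least one player guesses correctly and no player guesses incorrectly; the success probability of a strategy is the probability that the players win. Here $n=2$. *)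

(* Defs.v *)
From mathcomp Require Import all_boot all_order all_algebra.
Set Implicit Arguments. Unset Strict Implicit. Unset Printing Implicit Defensive.
Import Order.TTheory GRing.Theory Num.Theory.

(* A response: [None] = "pass", [Some c] = guess colour c. *)
Definition response (q : nat) := option 'I_q.

(* A (deterministic) strategy for two players:
   - P1 sees c2 (and hears nothing): responds [s1 c2];
   - P2 sees nothing, hears P1's response r1: responds [s2 r1]. *)
Record strategy2 (q : nat) := Strategy2 {
  s1 : 'I_q -> response q;
  s2 : response q -> response q }.

Definition correct q (r : response q) (c : 'I_q) : bool := r == Some c.
Definition incorrect q (r : response q) (c : 'I_q) : bool :=
  (r != None) && (r != Some c).

Definition wins q (S : strategy2 q) (c1 c2 : 'I_q) : bool :=
  let r1 := s1 S c2 in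
  let r2 := s2 S r1 in
  [&& correct r1 c1 || correct r2 c2, ~~ incorrect r1 c1 & ~~ incorrect r2 c2].

(* Hats are independent and uniform, so the success probability is the
   proportion of winning colourings among the q^2 equally likely ones. *)
Definition success_prob q (S : strategy2 q) : rat :=
  (#|[set c : 'I_q * 'I_q | wins S c.1 c.2]|%:R / (q ^ 2)%:R)%R.

(* Main.v *)
Require Import Defs.
From mathcomp Require Import all_boot all_order all_algebra.
From mathcomp Require Import zify ring lra.
Import Order.TTheory GRing.Theory Num.Theory.
Local Open Scope ring_scope.

Lemma upper (n : nat) (S : strategy2 n.+2) :
  (#|[set c : 'I_n.+2 * 'I_n.+2 | wins S c.1 c.2]| <= (2 * n.+2 - 1))%N.
Proof.
set b : 'I_n.+2 := odflt ord0 (s2 S None).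
set A := [set (c1, b) | c1 : 'I_n.+2].
set B := [set (odflt b (s1 S c2), c2) | c2 in [set~ b]].
have sub : [set c : 'I_n.+2 * 'I_n.+2 | wins S c.1 c.2] \subset A :|: B.
  apply/subsetP => -[c1 c2]; rewrite inE /wins /correct /incorrect /=.
  case E: (s1 S c2) => [a|] /=.
    case/and3P => _ /negP H _.
    have ac : a = c1 by apply/eqP; apply/negPn/negP => Hn; apply: H;
      rewrite /=; apply/negP; move/eqP => [] /eqP; rewrite (negbTE Hn).
    subst a.
    case: (eqVneq c2 b) => [->|nb]; rewrite in_setU; apply/orP; [left|right].
      by apply/imsetP; exists c1.
    by apply/imsetP; exists c2; rewrite ?inE ?E.
  move=> /andP [/eqP E2 _].
  rewrite in_setU; apply/orP; left; apply/imsetP; exists c1 => //.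
  by rewrite /b E2.
apply: leq_trans (subset_leq_card sub) _.
apply: leq_trans (leq_card_setU _ _) _.
have hA : (#|A| <= n.+2)%N by apply: leq_trans (leq_imset_card _ _) _; rewrite ?cardsT card_ord.
have hB : (#|B| <= n.+1)%N.
  by apply: leq_trans (leq_imset_card _ _) _; rewrite cardsC1 card_ord.
apply: leq_trans (leq_add hA hB) _; lia.
Qed.

Definition good n : strategy2 n.+2 :=
  Strategy2 (fun c2 : 'I_n.+2 => if c2 == ord0 then None else Some ord0)
            (fun r : response n.+2 => if r is None then Some ord0 else None).

Lemma lower n :
  (2 * n.+2 - 1 <= #|[set c : 'I_n.+2 * 'I_n.+2 | wins (good n) c.1 c.2]|)%N.
Proof.
set A := [set (c1, @ord0 n.+1) | c1 : 'I_n.+2].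
set B := [set (@ord0 n.+1, c2) | c2 in [set~ @ord0 n.+1]].
have sub : A :|: B \subset [set c : 'I_n.+2 * 'I_n.+2 | wins (good n) c.1 c.2].
  apply/subsetP => c; rewrite in_setU => /orP [/imsetP [c1 _ ->]|/imsetP [c2 H ->]];
    rewrite inE /wins /good /correct /incorrect /= ?eqxx //=.
  by move: H; rewrite !inE => /negbTE ->.
apply: leq_trans _ (subset_leq_card sub).
rewrite cardsU.
have -> : A :&: B = set0.
  apply/setP => c; rewrite !inE.
  apply/negP => /andP [/imsetP [c1 _ ->] /imsetP [c2 H [E1 E2]]].
  by move: H; rewrite !inE -E2 eqxx.
rewrite cards0 subn0 card_imset; last by move=> x y [].
rewrite card_imset; last by move=> x y [].
rewrite cardsC1 !card_ord; lia.
Qed.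

Theorem theorem3 (q : nat) (hq : (1 < q)%N) :
  (forall S : strategy2 q, success_prob S <= 1 - ((q - 1)%:R / q%:R) ^+ 2) /\
  (exists S : strategy2 q, success_prob S = 1 - ((q - 1)%:R / q%:R) ^+ 2) /\
  1 - ((q - 1)%:R / q%:R) ^+ 2 = (2 * q - 1)%:R / (q ^ 2)%:R :> rat.
Proof.
case: q hq => [|[|n]] // _.
have Ekey : 1 - ((n.+2 - 1)%:R / n.+2%:R) ^+ 2 = (2 * n.+2 - 1)%:R / (n.+2 ^ 2)%:R :> rat.
  have -> : (n.+2 - 1 = n.+1)%N by lia.
  have -> : (2 * n.+2 - 1 = 2 * n.+1 + 1)%N by lia.
  have h : (n.+2%:R : rat) != 0 by rewrite pnatr_eq0.
  move: h; rewrite natrX natrD natrM -(addn1 n.+1) natrD => h.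
  field; have hn : (0:rat) <= n%:R by rewrite ler0n.
  by apply/eqP; lra.
rewrite Ekey; split; [|split=> //].
  move=> S; rewrite /success_prob ler_pM2r ?invr_gt0 ?ltr0n ?expn_gt0 //.
  by rewrite ler_nat upper.
exists (good n); rewrite /success_prob; congr (_ / _).
by apply/eqP; rewrite eqr_nat eqn_leq upper lower.
Qed.
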